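(* For every integer $n\ge0$, the Hankel determinants $D_0(n,s,q)=\det\big(F(2i+2j,s,q)\big)_{i,j=0}^n$ and $D_1(n,s,q)=\det\big(F(2i+2j+1,s,q)\big)_{i,j=0}^n$ satisfy $$D_0(n,s,q)=D_0(n,0,q)\prod_{j=0}^n\Big((s-q^{2j})(s-q^{2j+1})\Big(s-\frac{1}{q^{2j}}\Big)\Big(s-\frac{1}{q^{2j+1}}\Big)\Big)^{n-j},$$ $$D_1(n,s,q)=D_1(n,0,q)\,(1-s)^{n+1}\prod_{j=0}^n\Big((s-q^{2j+2})(s-q^{2j+1})\Big(s-\frac{1}{q^{2j+2}}\Big)\Big(s-\frac{1}{q^{2j+1}}\Big)\Big)^{n-j}.$$
   Context: $q,s$ are indeterminates. $(x;q)_n=\prod_{j=0}^{n-1}(1-q^jx)$. The Gaussian binomial coefficient is $\begin{bmatrix} n\\ j\end{bmatrix}_q=\frac{(q;q)_n}{(q;q)_j(q;q)_{n-j}}$ for $0\le j\le n$ and $0$ otherwise. $F(n,s,q)=\dfrac{\sum_{j=0}^n(-s)^j\begin{bmatrix} n\\ j\end{bmatrix}_{q}}{(q;q^2)_{\lfloor (n+1)/2\rfloor}}$. $D_0(n,0,q)$ and $D_1(n,0,q)$ denote the respective determinants at $s=0$. *)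

(* Defs.v *)
From HB Require Import structures.
From mathcomp Require Import all_boot all_order all_algebra.
Set Implicit Arguments. Unset Strict Implicit. Unset Printing Implicit Defensive.
Import Order.TTheory GRing.Theory Num.Theory.
Local Open Scope ring_scope.

Section Defs.
Variable K : fieldType.

Definition qpoch (x q : K) (n : nat) : K := \prod_(j < n) (1 - q ^+ j * x).

Definition qbinom (q : K) (n j : nat) : K :=
  if (j <= n)%N then qpoch q q n / (qpoch q q j * qpoch q q (n - j)) else 0.

Definition Ffun (n : nat) (s q : K) : K :=
  (\sum_(j < n.+1) (- s) ^+ j * qbinom q n j) / qpoch q (q ^+ 2) (n.+1)./2.

Definition D0 (n : nat) (s q : K) : K :=
  \det (\matrix_(i < n.+1, j < n.+1) Ffun (2 * i + 2 * j) s q).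
Definition D1 (n : nat) (s q : K) : K :=
  \det (\matrix_(i < n.+1, j < n.+1) Ffun (2 * i + 2 * j + 1) s q).
End Defs.

(* The field Q(q)(s) of rational functions in two indeterminates q, s. *)
Definition Kq : fieldType := {fraction {poly rat}}.
Definition Kqs : fieldType := {fraction {poly Kq}}.
Definition qvar : Kqs := tofrac (polyC (tofrac ('X : {poly rat}) : Kq)).
Definition svar : Kqs := tofrac ('X : {poly Kq}).

(* Main.v *)
Require Import Defs.
From HB Require Import structures.
From mathcomp Require Import all_boot all_order all_algebra.
From mathcomp Require Import ring zify.
Import GRing.Theory.
Local Open Scope ring_scope.

Module Aux.
Set Implicit Arguments. Unset Strict Implicit. Unset Printing Implicit Defensive.


Section QB.
Variable K : fieldType.

Lemma qpochS (x b : K) n : qpoch x b n.+1 = qpoch x b n * (1 - b ^+ n * x).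
Proof. by rewrite /qpoch big_ord_recr. Qed.

Lemma qpoch0 (x b : K) : qpoch x b 0 = 1.
Proof. by rewrite /qpoch big_ord0. Qed.

Variable b : K.
Hypothesis hb : forall k, (0 < k)%N -> b ^+ k != 1.

Lemma fac_ne0 j : 1 - b ^+ j * b != 0.
Proof. by rewrite subr_eq0 eq_sym -exprSr hb. Qed.

Lemma qp_ne0 n : qpoch b b n != 0.
Proof.
elim: n => [|n IH]; first by rewrite qpoch0 oner_eq0.
by rewrite qpochS mulf_neq0 // fac_ne0.
Qed.

Lemma qb_closed n i : (i <= n)%N ->
  qbinom b n i = qpoch b b n / (qpoch b b i * qpoch b b (n - i)).
Proof. by rewrite /qbinom => ->. Qed.

Lemma qb_out n i : (n < i)%N -> qbinom b n i = 0.
Proof. by move=> h; rewrite /qbinom leqNgt h. Qed.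

Lemma qb_n0 n : qbinom b n 0 = 1.
Proof. by rewrite qb_closed // subn0 qpoch0 mul1r divff // qp_ne0. Qed.

Lemma qb_nn n : qbinom b n n = 1.
Proof. by rewrite qb_closed // subnn qpoch0 mulr1 divff // qp_ne0. Qed.

Lemma qb_pascal n i :
  qbinom b n.+1 i.+1 = qbinom b n i + b ^+ i.+1 * qbinom b n i.+1.
case: (ltngtP i n) => [lt_in|lt_ni|->].
- rewrite (qb_closed (ltnW lt_in)) (qb_closed lt_in) qb_closed //.
  have [k ->] : exists k, n = (i + k).+1.
    by exists (n - i.+1)%N; rewrite addnC -addnS subnK.
  have e1 : ((i + k).+2 - i.+1)%N = k.+1 by lia.
  have e2 : ((i + k).+1 - i)%N = k.+1 by lia.
  have e3 : ((i + k).+1 - i.+1)%N = k by lia.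
  rewrite e1 e2 e3.
  rewrite !qpochS.
  have h1 := qp_ne0 i; have h2 := qp_ne0 k.
  have f1 := fac_ne0 i; have f2 := fac_ne0 k.
  rewrite !exprS !exprD.
  move: (qpoch b b i) (qpoch b b k) (qpoch b b (i+k)) (b ^+ i) (b ^+ k) h1 h2 f1 f2 => P1 P2 P3 X Y h1 h2 f1 f2.
  field. by rewrite h1 h2 f1 f2.
  by rewrite ltnW.
- by rewrite !qb_out ?mulr0 ?addr0 // ltnW.
- by rewrite !qb_nn qb_out // mulr0 addr0.
Qed.

Lemma qb_pascal2 n i :
  qbinom b n.+1 i.+1 = b ^+ (n - i) * qbinom b n i + qbinom b n i.+1.
Proof.
case: (ltngtP i n) => [lt_in|lt_ni|->].
- rewrite (qb_closed (ltnW lt_in)) (qb_closed lt_in) qb_closed; last by rewrite ltnW.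
  have [k ->] : exists k, n = (i + k).+1.
    by exists (n - i.+1)%N; rewrite addnC -addnS subnK.
  have e1 : ((i + k).+2 - i.+1)%N = k.+1 by lia.
  have e2 : ((i + k).+1 - i)%N = k.+1 by lia.
  have e3 : ((i + k).+1 - i.+1)%N = k by lia.
  rewrite e1 e2 e3.
  rewrite !qpochS.
  have h1 := qp_ne0 i; have h2 := qp_ne0 k.
  have f1 := fac_ne0 i; have f2 := fac_ne0 k.
  rewrite !exprS !exprD.
  move: (qpoch b b i) (qpoch b b k) (qpoch b b (i+k)) (b ^+ i) (b ^+ k) h1 h2 f1 f2 => P1 P2 P3 X Y h1 h2 f1 f2.
  field. by rewrite h1 h2 f1 f2.
- by rewrite !qb_out ?mulr0 ?addr0 // ltnW.
- by rewrite !qb_nn qb_out // subnn expr0 mul1r addr0.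
Qed.

Lemma qb_mul n l i : (i <= l)%N -> (l <= n)%N ->
  qbinom b n l * qbinom b l i = qbinom b n i * qbinom b (n - i) (l - i).
Proof.
move=> il ln.
rewrite (qb_closed ln) (qb_closed il) (qb_closed (leq_trans il ln)) qb_closed; last by lia.
have -> : (n - i - (l - i) = n - l)%N by lia.
have h1 := qp_ne0 i; have h2 := qp_ne0 (l - i); have h3 := qp_ne0 (n - l).
have h4 := qp_ne0 l; have h5 := qp_ne0 (n - i).
move: (qpoch b b i) (qpoch b b (l - i)) (qpoch b b (n - l)) (qpoch b b l) (qpoch b b (n - i)) (qpoch b b n) h1 h2 h3 h4 h5 => P1 P2 P3 P4 P5 P6 h1 h2 h3 h4 h5.
field. by rewrite h1 h2 h3 h4 h5.
Qed.

Definition gs m := \sum_(u < m.+1) (-1) ^+ u * qbinom b m u.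
Definition gps m := \sum_(u < m.+1) (-1) ^+ u * b ^+ u * qbinom b m u.

Lemma gaux m : \sum_(u < m.+1) (-1) ^+ u * b ^+ u.+1 * qbinom b m u.+1 = 1 - gps m.
Proof.
rewrite /gps big_ord_recr /= qb_out // mulr0 addr0 big_ord_recl /= expr0 !mul1r qb_n0.
rewrite opprD addrA subrr add0r -sumrN; apply: eq_bigr => u _.
rewrite /bump /= add1n !exprS; move: ((-1) ^+ u) (b ^+ u) (qbinom b m u.+1) => x y z; ring.
Qed.

Lemma gsS m : gs m.+1 = gps m - gs m.
Proof.
rewrite /gs big_ord_recl /= expr0 mul1r qb_n0.
under eq_bigr => u _ do rewrite /bump /= add1n qb_pascal exprS mulrDr.
rewrite big_split /=.
have E1 : \sum_(u < m.+1) (-1 * (-1) ^+ u * qbinom b m u) = - \sum_(u < m.+1) (-1) ^+ u * qbinom b m u.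
  by rewrite -sumrN; apply: eq_bigr => u _; rewrite mulN1r mulNr.
have E2 : \sum_(u < m.+1) (-1 * (-1) ^+ u * (b ^+ u.+1 * qbinom b m u.+1)) = - (1 - gps m).
  by rewrite -gaux -sumrN; apply: eq_bigr => u _; rewrite mulN1r !mulNr mulrA.
rewrite E1 E2; ring.
Qed.

Lemma gpsS m : gps m.+1 = - b ^+ m.+1 * gs m + gps m.
Proof.
rewrite {1}/gps big_ord_recl /= expr0 !mul1r qb_n0.
have -> : \sum_(i < m.+1) (-1) ^+ bump 0 i * b ^+ bump 0 i * qbinom b m.+1 (bump 0 i)
  = - b ^+ m.+1 * gs m - \sum_(u < m.+1) (-1) ^+ u * b ^+ u.+1 * qbinom b m u.+1.
  rewrite /gs mulr_sumr -sumrN -big_split /=; apply: eq_bigr => [[u hu]] _.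
  rewrite /bump /= add1n qb_pascal2 !exprS.
  have -> : b ^+ m = b ^+ u * b ^+ (m - u) by rewrite -exprD subnKC // -ltnS.
  move: ((-1) ^+ u) (b ^+ u) (b ^+ (m - u)) (qbinom b m u) (qbinom b m u.+1) => x y z w v.
  ring.
rewrite gaux. move: (b ^+ m.+1) (gs m) (gps m) => x y z. ring.
Qed.

Lemma gs0 : gs 0 = 1.
Proof. by rewrite /gs big_ord_recl big_ord0 qb_n0 expr0 mul1r addr0. Qed.

Lemma gs1 : gs 1 = 0.
Proof.
rewrite /gs !big_ord_recl big_ord0 /= qb_n0 qb_nn.
rewrite /bump /=. by rewrite expr0 expr1 addr0 mul1r mulr1 subrr.
Qed.

Lemma gsSS m : gs m.+2 = (1 - b ^+ m.+1) * gs m.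
Proof. rewrite gsS gpsS gsS. ring. Qed.

Lemma gs_even k : gs (2 * k) = qpoch b (b ^+ 2) k.
Proof.
elim: k => [|k IH]; first by rewrite muln0 gs0 qpoch0.
rewrite mulnS add2n gsSS IH qpochS -exprM -exprSr mulnC. ring.
Qed.

Lemma gs_odd k : gs (2 * k).+1 = 0.
Proof.
elim: k => [|k IH]; first by rewrite muln0 gs1.
by rewrite mulnS add2n gsSS IH mulr0.
Qed.

End QB.


Section NW.
Variable K : fieldType.
Variable b : K.
Hypothesis hb : forall k, (0 < k)%N -> b ^+ k != 1.
Variable c : K.

Definition Pn i : {poly K} := \prod_(k < i) ('X - (c * b ^+ k)%:P).

Lemma PnS i : Pn i.+1 = Pn i * ('X - (c * b ^+ i)%:P).
Proof. by rewrite /Pn big_ord_recr. Qed.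

Lemma XPn i : 'X * Pn i = Pn i.+1 + (c * b ^+ i) *: Pn i.
Proof. rewrite PnS -mul_polyC. move: (Pn i) ((c * b ^+ i)%:P) => x y. ring. Qed.

Lemma newton l m : (l < m)%N ->
  'X^l = \sum_(i < m) (qbinom b l i * c ^+ (l - i)) *: Pn i.
Proof.
elim: l m => [|l IH] [|m] //.
  move=> _; rewrite big_ord_recl /= qb_n0 // expr0 mulr1 scale1r /Pn big_ord0.
  rewrite big1 ?addr0 // => i _. by rewrite qb_out // mul0r scale0r.
move=> hlm; rewrite exprS (IH m.+1 (ltnW hlm)) mulr_sumr.
under eq_bigr => i _ do rewrite -scalerAr XPn scalerDr scalerA.
rewrite big_split /=.
rewrite [X in X + _]big_ord_recr /= qb_out // mul0r scale0r addr0.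
rewrite [X in _ + X]big_ord_recl /= [RHS]big_ord_recl /= !qb_n0 // !subn0 expr0 !mulr1.
rewrite addrCA mul1r -exprSr; congr (_ + _).
  by rewrite mul1r.
rewrite -big_split /=; apply: eq_bigr => i _.
rewrite /bump /= !add1n qb_pascal // -scalerDl subSS; congr (_ *: _).
case: (ltnP i l) => hil.
  have -> : (l - i = (l - i.+1).+1)%N by lia.
  rewrite !exprS. move: (qbinom b l i) (qbinom b l i.+1) (c ^+ (l - i.+1)) (b ^+ i) => x y z w. ring.
rewrite (@qb_out _ _ l i.+1) ?ltnS // !mulr0 mul0r addr0.
by rewrite mul0r addr0.
Qed.
End NW.


Section KE.
Variable K : fieldType.
Variable q : K.
Hypothesis hq : forall k, (0 < k)%N -> q ^+ k != 1.

Definition Nn i (s : K) := \prod_(k < i) (s - q ^+ k).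

Lemma newton_s l m s : (l < m)%N -> s ^+ l = \sum_(i < m) qbinom q l i * Nn i s.
Proof.
move=> hlm; have := congr1 (fun p => p.[s]) (newton hq 1 hlm).
rewrite hornerXn => ->; rewrite horner_sum; apply: eq_bigr => i _.
rewrite hornerZ expr1n mulr1 /Pn horner_prod /Nn; congr (_ * _).
by apply: eq_bigr => k _; rewrite hornerXsubC mul1r.
Qed.

Lemma inner_sum n (i : 'I_n.+1) :
  \sum_(l < n.+1) (-1) ^+ l * qbinom q n l * qbinom q l i
  = (-1) ^+ i * qbinom q n i * gs q (n - i).
Proof.
have hi : (i <= n.+1)%N by apply: ltnW.
rewrite -(big_mkord xpredT (fun l => (-1) ^+ l * qbinom q n l * qbinom q l i)).
rewrite (@big_cat_nat _ _ _ i) //= big_nat_cond big1 ?add0r; last first.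
  by move=> l /andP [/andP [_ hl] _]; rewrite (qb_out _ hl) mulr0.
rewrite -{1}(add0n i) big_addn big_mkord /gs mulr_sumr.
have -> : (n.+1 - i = (n - i).+1)%N by rewrite subSn // -ltnS.
apply: eq_bigr => u _.
have hu := ltn_ord u; have hin := ltn_ord i.
rewrite -mulrA (qb_mul hq); [|by lia|by lia].
rewrite addnK exprD.
move: ((-1) ^+ u) ((-1) ^+ i) (qbinom q n i) (qbinom q (n - i) u) => x y z w; ring.
Qed.

Definition hh n (s : K) := \sum_(l < n.+1) (- s) ^+ l * qbinom q n l.

Lemma hh_expand n s :
  hh n s = \sum_(i < n.+1) (-1) ^+ i * qbinom q n i * gs q (n - i) * Nn i s.
Proof.
rewrite /hh.
transitivity (\sum_(l < n.+1) \sum_(i < n.+1) (-1) ^+ l * qbinom q n l * qbinom q l i * Nn i s).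
  apply: eq_bigr => l _.
  rewrite -[- s]mulN1r exprMn (newton_s s (ltn_ord l)) mulr_sumr mulr_suml.
  apply: eq_bigr => i _.
  move: ((-1) ^+ l) (qbinom q n l) (qbinom q l i) (Nn i s) => x y z w; ring.
rewrite exchange_big /=; apply: eq_bigr => i _.
rewrite -inner_sum mulr_suml; apply: eq_bigr => l _; done.
Qed.

Definition qo m := qpoch q (q ^+ 2) m.
Definition Ne (e a : nat) (s : K) := \prod_(t < 2 * a) (s - q ^+ (t + e)).
Definition mom (e r : nat) (s : K) :=
  \sum_(a < r.+1) qbinom (q ^+ 2) r a * Ne e a s / qo (a + e).

Lemma hQ : forall k, (0 < k)%N -> (q ^+ 2) ^+ k != 1.
Proof. by move=> k hk; rewrite -exprM hq // muln_gt0 hk. Qed.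

Lemma qo_ne0 m : qo m != 0.
Proof.
elim: m => [|m IH]; first by rewrite /qo qpoch0 oner_eq0.
rewrite /qo qpochS mulf_neq0 // subr_eq0 eq_sym -exprM -exprSr hq //.
Qed.

Lemma poch_even m : qpoch q q (2 * m) = qo m * qpoch (q ^+ 2) (q ^+ 2) m.
Proof.
elim: m => [|m IH]; first by rewrite muln0 /qo !qpoch0 mulr1.
rewrite mulnS add2n !qpochS IH /qo qpochS.
rewrite -!exprM -!exprSr.
have -> : q ^+ (2 * m).+1 = q ^+ (2 * m) * q by rewrite exprSr.
have -> : q ^+ (2 * m).+2 = q ^+ (2 * m) * q * q by rewrite !exprSr.
rewrite expr2.
move: (qpoch q (q ^+ 2) m) (qpoch (q ^+ 2) (q ^+ 2) m) (q ^+ (2 * m)) => x y z; ring.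
Qed.

Lemma poch_odd m : qpoch q q (2 * m).+1 = qo m.+1 * qpoch (q ^+ 2) (q ^+ 2) m.
Proof.
rewrite qpochS poch_even /qo qpochS -exprM -exprSr.
move: (qpoch q (q ^+ 2) m) (qpoch (q ^+ 2) (q ^+ 2) m) => x y; ring.
Qed.

Lemma sum_split2 (F : nat -> K) m :
  \sum_(i < 2 * m) F i = \sum_(a < m) F (2 * a)%N + \sum_(a < m) F (2 * a).+1.
Proof.
elim: m => [|m IH]; first by rewrite muln0 !big_ord0 addr0.
rewrite mulnS add2n !big_ord_recr /= IH; ring.
Qed.

Lemma Nn_even a s : Nn (2 * a) s = Ne 0 a s.
Proof. by apply: eq_bigr => t _; rewrite addn0. Qed.

Lemma Nn_odd a s : Nn (2 * a).+1 s = (s - 1) * Ne 1 a s.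
Proof.
rewrite /Nn big_ord_recl expr0; congr (_ * _); apply: eq_bigr => t _.
by rewrite lift0 addn1.
Qed.

Lemma m1even a : (-1) ^+ (2 * a) = 1 :> K.
Proof. by rewrite exprM sqrrN expr1n expr1n. Qed.

Lemma hh_even r s :
  hh (2 * r) s = \sum_(a < r.+1) qbinom q (2 * r) (2 * a) * qo (r - a) * Ne 0 a s.
Proof.
rewrite hh_expand big_ord_recr /=.
rewrite (sum_split2 (fun i => (-1) ^+ i * qbinom q (2 * r) i * gs q (2 * r - i) * Nn i s)) big_ord_recr /=.
rewrite [X in _ + X + _]big1 ?addr0; last first.
  move=> [a ha] _ /=.
  have -> : (2 * r - (2 * a).+1 = (2 * (r - a.+1)).+1)%N by lia.
  by rewrite gs_odd // mulr0 mul0r.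
congr (_ + _).
  apply: eq_bigr => [[a ha]] _ /=.
  have -> : (2 * r - 2 * a = 2 * (r - a))%N by lia.
  by rewrite m1even mul1r gs_even // Nn_even.
by rewrite !subnn m1even mul1r gs0 // Nn_even /qo qpoch0.
Qed.

Lemma hh_odd r s :
  hh (2 * r).+1 s = (1 - s) * \sum_(a < r.+1) qbinom q (2 * r).+1 (2 * a).+1 * qo (r - a) * Ne 1 a s.
Proof.
rewrite hh_expand.
have E : ((2 * r).+2 = 2 * r.+1)%N by lia.
rewrite E (sum_split2 (fun i => (-1) ^+ i * qbinom q (2 * r).+1 i * gs q ((2 * r).+1 - i) * Nn i s)).
rewrite [X in X + _]big1 ?add0r; last first.
  move=> [a ha] _ /=.
  have -> : ((2 * r).+1 - 2 * a = (2 * (r - a)).+1)%N by lia.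
  by rewrite gs_odd // mulr0 mul0r.
rewrite mulr_sumr; apply: eq_bigr => [[a ha]] _ /=.
have -> : ((2 * r).+1 - (2 * a).+1 = 2 * (r - a))%N by lia.
rewrite gs_even // Nn_odd exprS m1even mulr1.
rewrite /qo; move: (qbinom q (2 * r).+1 (2 * a).+1) (qpoch q (q ^+ 2) (r - a)) (Ne 1 a s) => x y z; ring.
Qed.

Lemma conv_even r a : (a <= r)%N ->
  qbinom q (2 * r) (2 * a) * qo (r - a) / qo r = qbinom (q ^+ 2) r a / qo a.
Proof.
move=> har; rewrite !qb_closed //; try lia.
have -> : (2 * r - 2 * a = 2 * (r - a))%N by lia.
rewrite !poch_even.
have h1 := qo_ne0 r; have h2 := qo_ne0 a; have h3 := qo_ne0 (r - a).
have h4 := qp_ne0 hQ r; have h5 := qp_ne0 hQ a; have h6 := qp_ne0 hQ (r - a).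
move: (qo r) (qo a) (qo (r - a)) (qpoch (q ^+ 2) (q ^+ 2) r) (qpoch (q ^+ 2) (q ^+ 2) a)
  (qpoch (q ^+ 2) (q ^+ 2) (r - a)) h1 h2 h3 h4 h5 h6 => x1 x2 x3 x4 x5 x6 h1 h2 h3 h4 h5 h6.
field. by rewrite h1 h2 h3 h5 h6.
Qed.

Lemma conv_odd r a : (a <= r)%N ->
  qbinom q (2 * r).+1 (2 * a).+1 * qo (r - a) / qo r.+1 = qbinom (q ^+ 2) r a / qo a.+1.
Proof.
move=> har; rewrite !qb_closed //; try lia.
have -> : ((2 * r).+1 - (2 * a).+1 = 2 * (r - a))%N by lia.
rewrite !poch_even !poch_odd.
have h1 := qo_ne0 r.+1; have h2 := qo_ne0 a.+1; have h3 := qo_ne0 (r - a).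
have h4 := qp_ne0 hQ r; have h5 := qp_ne0 hQ a; have h6 := qp_ne0 hQ (r - a).
move: (qo r.+1) (qo a.+1) (qo (r - a)) (qpoch (q ^+ 2) (q ^+ 2) r) (qpoch (q ^+ 2) (q ^+ 2) a)
  (qpoch (q ^+ 2) (q ^+ 2) (r - a)) h1 h2 h3 h4 h5 h6 => x1 x2 x3 x4 x5 x6 h1 h2 h3 h4 h5 h6.
field. by rewrite h1 h2 h3 h5 h6.
Qed.

Lemma KE0 r s : Ffun (2 * r) s q = mom 0 r s.
Proof.
rewrite /Ffun -/(hh (2 * r) s).
have -> : ((2 * r).+1./2 = r)%N by rewrite mul2n; exact: uphalf_double.
rewrite -/(qo r) hh_even mulr_suml /mom; apply: eq_bigr => [[a ha]] _ /=.
rewrite addn0 [RHS]mulrAC -conv_even; last by rewrite -ltnS.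
have h := qo_ne0 r.
move: (qbinom q (2 * r) (2 * a)) (qo (r - a)) (qo r) (Ne 0 a s) h => x y z w h.
field. done.
Qed.

Lemma KE1 r s : Ffun (2 * r).+1 s q = (1 - s) * mom 1 r s.
Proof.
rewrite /Ffun -/(hh (2 * r).+1 s).
have -> : ((2 * r).+2./2 = r.+1)%N by rewrite (_ : (2 * r).+2 = 2 * r.+1)%N ?mul2n ?half_double //; lia.
rewrite -/(qo r.+1) hh_odd -mulrA; congr (_ * _).
rewrite mulr_suml /mom; apply: eq_bigr => [[a ha]] _ /=.
rewrite addn1 [RHS]mulrAC -conv_odd; last by rewrite -ltnS.
have h := qo_ne0 r.+1.
move: (qbinom q (2 * r).+1 (2 * a).+1) (qo (r - a)) (qo r.+1) (Ne 1 a s) h => x y z w h.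
field. done.
Qed.
End KE.


Section LF.
Variable K : fieldType.
Variable mu : nat -> K.

Definition Lf (p : {poly K}) := \sum_(i < size p) p`_i * mu i.

Lemma Lf_widen N (p : {poly K}) : (size p <= N)%N -> Lf p = \sum_(i < N) p`_i * mu i.
Proof.
move=> h; rewrite /Lf (big_ord_widen _ (fun i => p`_i * mu i) h) big_mkcond.
apply: eq_bigr => i _; case: ifP => // /negbT; rewrite -leqNgt => hi.
by rewrite nth_default // mul0r.
Qed.

Lemma LfD p r : Lf (p + r) = Lf p + Lf r.
Proof.
rewrite !(Lf_widen (N := maxn (size p) (size r))) ?leq_maxl ?leq_maxr ?size_polyD //.
by rewrite -big_split; apply: eq_bigr => i _; rewrite coefD mulrDl.
Qed.

Lemma LfZ c p : Lf (c *: p) = c * Lf p.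
Proof.
rewrite (Lf_widen (N := size p)) ?size_scale_leq // /Lf mulr_sumr.
by apply: eq_bigr => i _; rewrite coefZ mulrA.
Qed.

Lemma Lf0 : Lf 0 = 0.
Proof. by rewrite /Lf size_poly0 big_ord0. Qed.

Lemma Lf_sum m (F : 'I_m -> {poly K}) : Lf (\sum_(i < m) F i) = \sum_(i < m) Lf (F i).
Proof.
elim: m F => [|m IH] F; first by rewrite !big_ord0 Lf0.
by rewrite !big_ord_recr /= LfD IH.
Qed.

Lemma LfXn r : Lf 'X^r = mu r.
Proof.
rewrite /Lf size_polyXn big_ord_recr /= big1 ?add0r; first by rewrite coefXn eqxx mul1r.
by move=> i _; rewrite coefXn (ltn_eqF (ltn_ord i)) mul0r.
Qed.
End LF.

Section MAIN.
Variable K : fieldType.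
Variable q : K.
Hypothesis hq : forall k, (0 < k)%N -> q ^+ k != 1.
Hypothesis hq0 : q != 0.
Variable e : nat.
Variable s : K.

Local Notation Q := (q ^+ 2).
Local Notation mu := (fun r => mom q e r s).
Local Notation L := (Lf mu).

Definition Pp a := Pn Q 1 a.
Definition Pq b := Pn Q (s ^+ 2) b.

Lemma Lf_Pp a : L (Pp a) = Ne q e a s / qo q (a + e).
Proof.
elim/ltn_ind: a => a IH.
have := LfXn mu a.
rewrite (newton (hQ hq) 1 (ltnSn a)) Lf_sum /= /mom big_ord_recr /= [RHS]big_ord_recr /=.
under eq_bigr => i _ do rewrite LfZ expr1n mulr1.
rewrite LfZ expr1n mulr1 !(qb_nn (hQ hq)) !mul1r.
have -> : \sum_(i < a) qbinom Q a i * L (Pn Q 1 i) =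
          \sum_(i < a) qbinom Q a i * Ne q e i s / qo q (i + e).
  by apply: eq_bigr => i _; rewrite -/(Pp i) IH // mulrA.
by move/addrI.
Qed.

Definition G a b := L (Pp a * Pq b).

Lemma PpS a : Pp a.+1 = Pp a * ('X - (Q ^+ a)%:P).
Proof. by rewrite /Pp PnS mul1r. Qed.

Lemma PqS b : Pq b.+1 = Pq b * ('X - (s ^+ 2 * Q ^+ b)%:P).
Proof. by rewrite /Pq PnS. Qed.

Lemma Grec a b : G a.+1 b = G a b.+1 + (s ^+ 2 * Q ^+ b - Q ^+ a) * G a b.
Proof.
rewrite /G -LfZ -LfD; congr (L _).
rewrite PpS PqS -mul_polyC polyCB.
move: (Pp a) (Pq b) ((Q ^+ a)%:P) ((s ^+ 2 * Q ^+ b)%:P) => x y z w; ring.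
Qed.

Definition Ve b := \prod_(t < 2 * b) (s - 1 / q ^+ (t + e)).

Definition cc a b := q ^+ (2 * a * b + 2 * b * b + 2 * e * b) / q ^+ b / qo q (a + b + e).

Definition Cc a b := cc a b * Ne q e a s * Ve b.

Lemma NeS a : Ne q e a.+1 s = Ne q e a s * (s - q ^+ (2 * a + e)) * (s - q ^+ (2 * a + e) * q).
Proof.
by rewrite /Ne mulnS add2n !big_ord_recr /= addSn exprSr.
Qed.

Lemma VeS b : Ve b.+1 = Ve b * (s - 1 / q ^+ (2 * b + e)) * (s - 1 / (q ^+ (2 * b + e) * q)).
Proof.
by rewrite /Ve mulnS add2n !big_ord_recr /= addSn exprSr.
Qed.

Lemma qoS m : qo q m.+1 = qo q m * (1 - q ^+ (2 * m) * q).
Proof. by rewrite /qo qpochS -exprM. Qed.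

Lemma Cc_rec a b : Cc a.+1 b = Cc a b.+1 + (s ^+ 2 * Q ^+ b - Q ^+ a) * Cc a b.
Proof.
rewrite /Cc /cc NeS VeS.
have -> : (a.+1 + b + e = (a + b + e).+1)%N by lia.
have -> : (a + b.+1 + e = (a + b + e).+1)%N by lia.
rewrite !qoS.
set m := (a + b + e)%N.
have E1 : q ^+ (2 * a.+1 * b + 2 * b * b + 2 * e * b) = q ^+ (2 * a * b + 2 * b * b + 2 * e * b) * q ^+ b * q ^+ b.
  by rewrite -!exprD; congr (_ ^+ _); lia.
have E2 : q ^+ (2 * a * b.+1 + 2 * b.+1 * b.+1 + 2 * e * b.+1) =
   q ^+ (2 * a * b + 2 * b * b + 2 * e * b) * q ^+ a * q ^+ a * q ^+ b * q ^+ b * q ^+ b * q ^+ b * q ^+ e * q ^+ e * q ^+ 2.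
  by rewrite -!exprD; congr (_ ^+ _); lia.
have E3 : q ^+ (2 * a + e) = q ^+ a * q ^+ a * q ^+ e by rewrite -!exprD; congr (_ ^+ _); lia.
have E4 : q ^+ (2 * b + e) = q ^+ b * q ^+ b * q ^+ e by rewrite -!exprD; congr (_ ^+ _); lia.
have E5 : q ^+ (2 * m) = q ^+ a * q ^+ a * q ^+ b * q ^+ b * q ^+ e * q ^+ e by rewrite -!exprD; congr (_ ^+ _); rewrite /m; lia.
have E6 : Q ^+ a = q ^+ a * q ^+ a by rewrite -exprM mulnC exprM expr2.
have E7 : Q ^+ b = q ^+ b * q ^+ b by rewrite -exprM mulnC exprM expr2.
rewrite E1 E2 E3 E4 E5 E6 E7 [q ^+ 2]expr2 (exprS q b).
have h1 := qo_ne0 hq m.+1. rewrite qoS E5 in h1.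
have hb : q ^+ b != 0 by rewrite expf_neq0.
have ha : q ^+ a != 0 by rewrite expf_neq0.
have he : q ^+ e != 0 by rewrite expf_neq0.
move: h1; rewrite mulf_eq0 negb_or => /andP [h1 h2].
move: (q ^+ (2 * a * b + 2 * b * b + 2 * e * b)) (q ^+ a) (q ^+ b) (q ^+ e) (qo q m) (Ne q e a s) (Ve b) h1 h2 ha hb he
  => P A B E X N V h1 h2 ha hb he.
field. by rewrite h1 h2 hb he hq0.
Qed.

Lemma G_closed b a : G a b = Cc a b.
Proof.
elim: b a => [|b IH] a.
  rewrite /G /Pq /Pn big_ord0 mulr1 Lf_Pp /Cc /cc /Ve big_ord0 !muln0 !addn0 expr0 divr1 mulr1.
  by rewrite mul1r mulrC.
have := Grec a b; rewrite !IH Cc_rec => /addIr.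
by move=> ->.
Qed.

Variable n : nat.

Definition Hmat := \matrix_(i < n.+1, j < n.+1) mom q e (i + j) s.
Definition Amat := \matrix_(r < n.+1, a < n.+1) qbinom Q r a.
Definition Bmat := \matrix_(t < n.+1, b < n.+1) (qbinom Q t b * (s ^+ 2) ^+ (t - b)).
Definition Mmat := \matrix_(a < n.+1, b < n.+1) G a b.
Definition cmat := \matrix_(a < n.+1, b < n.+1) cc a b.

Lemma prod_sums (m : nat) (al be : 'I_m -> K) (P R : 'I_m -> {poly K}) :
  (\sum_(a < m) al a *: P a) * (\sum_(b < m) be b *: R b) =
  \sum_(a < m) \sum_(b < m) (al a * be b) *: (P a * R b).
Proof.
rewrite mulr_suml; apply: eq_bigr => a _; rewrite mulr_sumr; apply: eq_bigr => b _.
by rewrite -scalerAl -scalerAr scalerA.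
Qed.

Lemma H_fact : Hmat = Amat *m Mmat *m Bmat^T.
Proof.
apply/matrixP => r t; rewrite !mxE.
transitivity (L ('X^r * 'X^t)); first by rewrite -exprD LfXn.
rewrite (newton (hQ hq) 1 (ltn_ord r)) (newton (hQ hq) (s ^+ 2) (ltn_ord t)).
rewrite prod_sums Lf_sum.
under eq_bigr => a _ do rewrite Lf_sum.
under [RHS]eq_bigr => b _ do rewrite !mxE mulr_suml.
rewrite [RHS]exchange_big /=; apply: eq_bigr => a _; apply: eq_bigr => b _.
rewrite LfZ !mxE expr1n mulr1 -/(Pp a) -/(Pq b) -/(G a b).
move: (qbinom Q r a) (qbinom Q t b * (s ^+ 2) ^+ (t - b)) (G a b) => x y z; ring.
Qed.

Lemma det_trig1 (A : 'M[K]_n.+1) : (forall i j : 'I_n.+1, (i < j)%N -> A i j = 0) ->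
  (forall i, A i i = 1) -> \det A = 1.
Proof.
move=> h1 h2; rewrite det_trig; last by apply/is_trig_mxP.
by rewrite big1 // => i _; rewrite h2.
Qed.

Lemma M_fact : Mmat = diag_mx (\row_(a < n.+1) Ne q e a s) *m cmat *m diag_mx (\row_(b < n.+1) Ve b).
Proof.
apply/matrixP => a b; rewrite mul_mx_diag mul_diag_mx !mxE G_closed /Cc.
by rewrite [cc a b * _]mulrC.
Qed.

Lemma detH : \det Hmat = (\prod_(a < n.+1) (Ne q e a s * Ve a)) * \det cmat.
Proof.
rewrite H_fact !det_mulmx det_tr.
rewrite (det_trig1 (A := Amat)); last 2 first.
- by move=> i j hij; rewrite mxE qb_out.
- by move=> i; rewrite mxE (qb_nn (hQ hq)).
rewrite (det_trig1 (A := Bmat)); last 2 first.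
- by move=> i j hij; rewrite mxE qb_out // mul0r.
- by move=> i; rewrite mxE (qb_nn (hQ hq)) subnn expr0 mulr1.
rewrite M_fact !det_mulmx !det_diag big_split /=.
rewrite mul1r mulr1.
under eq_bigr => i _ do rewrite mxE.
under [X in _ * _ * X]eq_bigr => i _ do rewrite mxE.
move: (\prod_(i < n.+1) Ne q e i s) (\prod_(i < n.+1) Ve i) (\det cmat) => x y z; ring.
Qed.
End MAIN.


Section FIN.
Variable K : fieldType.
Variable q : K.
Hypothesis hq : forall k, (0 < k)%N -> q ^+ k != 1.
Hypothesis hq0 : q != 0.

Lemma D0_formula n s :
  D0 n s q = (\prod_(a < n.+1) (Ne q 0 a s * Ve q 0 s a)) * \det (cmat q 0 n).
Proof.
rewrite -(detH hq hq0); congr (\det _); apply/matrixP => i j; rewrite !mxE.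
by rewrite -mulnDr KE0.
Qed.

Lemma D1_formula n s :
  D1 n s q = (1 - s) ^+ n.+1 * ((\prod_(a < n.+1) (Ne q 1 a s * Ve q 1 s a)) * \det (cmat q 1 n)).
Proof.
rewrite -(detH hq hq0) -detZ; congr (\det _); apply/matrixP => i j; rewrite !mxE.
by rewrite -mulnDr addn1 KE1.
Qed.

Definition gg e s j := (s - q ^+ (2 * j + e)) * (s - q ^+ (2 * j + e) * q)
   * (s - 1 / q ^+ (2 * j + e)) * (s - 1 / (q ^+ (2 * j + e) * q)).

Lemma NeVe e s a : Ne q e a s * Ve q e s a = \prod_(j < a) gg e s j.
Proof.
elim: a => [|a IH]; first by rewrite /Ne /Ve muln0 !big_ord0 mulr1.
rewrite NeS VeS big_ord_recr /= -IH /gg.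
move: (Ne q e a s) (Ve q e s a) (q ^+ (2 * a + e)) => x y z; ring.
Qed.

Lemma prod_tri (F : nat -> K) n :
  \prod_(a < n.+1) \prod_(j < a) F j = \prod_(j < n.+1) F j ^+ (n - j).
Proof.
elim: n => [|n IH]; first by rewrite !big_ord_recr !big_ord0 /= !mul1r.
rewrite big_ord_recr /= IH [RHS]big_ord_recr /= subnn expr0 mulr1 -big_split /=.
apply: eq_bigr => j _; have hj : (j <= n)%N by rewrite -ltnS.
by rewrite (subSn hj) exprSr.
Qed.

Lemma gg0 e j : gg e 0 j = 1.
Proof.
rewrite /gg; have h : q ^+ (2 * j + e) != 0 by rewrite expf_neq0.
move: (q ^+ (2 * j + e)) h => x h; field. by rewrite h hq0.
Qed.

Lemma prod0 e n : \prod_(a < n.+1) (Ne q e a 0 * Ve q e 0 a) = 1.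
Proof.
by rewrite big1 // => a _; rewrite NeVe big1 // => j _; rewrite gg0.
Qed.

Lemma thm_general n s :
  D0 n s q =
    D0 n 0 q *
    \prod_(j < n.+1)
      ((s - q ^+ (2 * j)) * (s - q ^+ (2 * j).+1)
       * (s - 1 / q ^+ (2 * j)) * (s - 1 / q ^+ (2 * j).+1))
        ^+ (n - j)
  /\
  D1 n s q =
    D1 n 0 q * (1 - s) ^+ n.+1 *
    \prod_(j < n.+1)
      ((s - q ^+ (2 * j).+2) * (s - q ^+ (2 * j).+1)
       * (s - 1 / q ^+ (2 * j).+2) * (s - 1 / q ^+ (2 * j).+1))
        ^+ (n - j).
Proof.
split.
- rewrite !D0_formula prod0 mul1r mulrC; congr (_ * _).
  under eq_bigr => a _ do rewrite NeVe.
  rewrite (prod_tri (gg 0 s)); apply: eq_bigr => j _; congr (_ ^+ _).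
  by rewrite /gg addn0 -!exprSr.
- rewrite !D1_formula prod0 subr0 expr1n !mul1r.
  have -> : \prod_(a < n.+1) (Ne q 1 a s * Ve q 1 s a) =
    \prod_(j < n.+1)
      ((s - q ^+ (2 * j).+2) * (s - q ^+ (2 * j).+1)
       * (s - 1 / q ^+ (2 * j).+2) * (s - 1 / q ^+ (2 * j).+1))
        ^+ (n - j).
    under eq_bigr => a _ do rewrite NeVe.
    rewrite (prod_tri (gg 1 s)); apply: eq_bigr => j _; congr (_ ^+ _).
    rewrite /gg addn1 -!exprSr.
    move: (q ^+ (2 * j).+1) (q ^+ (2 * j).+2) => x y; ring.
  move: (\prod_(j < n.+1) _) (\det _) ((1 - s) ^+ n.+1) => x y z; ring.
Qed.
End FIN.


Lemma qvarX k : qvar ^+ k = tofrac ((tofrac ('X^k : {poly rat}) : Kq)%:P).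
Proof. by rewrite /qvar -!rmorphXn. Qed.

Lemma qvar_hq : forall k, (0 < k)%N -> qvar ^+ k != 1.
Proof.
move=> k hk; rewrite qvarX -tofrac1 tofrac_eq -polyC1 (inj_eq polyC_inj).
rewrite -tofrac1 tofrac_eq; apply/eqP => h; have := congr1 (fun p : {poly rat} => size p) h.
by rewrite /= size_polyXn size_poly1; case: k hk h.
Qed.

Lemma qvar_ne0 : qvar != 0.
Proof.
have := qvarX 1; rewrite expr1 => ->.
rewrite tofrac_eq0 polyC_eq0 tofrac_eq0 expr1 polyX_eq0 //.
Qed.

End Aux.

Theorem theorem3p2 (n : nat) :
  D0 n svar qvar =
    D0 n 0 qvar *
    \prod_(j < n.+1)
      ((svar - qvar ^+ (2 * j)) * (svar - qvar ^+ (2 * j).+1)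
       * (svar - 1 / qvar ^+ (2 * j)) * (svar - 1 / qvar ^+ (2 * j).+1))
        ^+ (n - j)
  /\
  D1 n svar qvar =
    D1 n 0 qvar * (1 - svar) ^+ n.+1 *
    \prod_(j < n.+1)
      ((svar - qvar ^+ (2 * j).+2) * (svar - qvar ^+ (2 * j).+1)
       * (svar - 1 / qvar ^+ (2 * j).+2) * (svar - 1 / qvar ^+ (2 * j).+1))
        ^+ (n - j).
Proof. exact: (Aux.thm_general Aux.qvar_hq Aux.qvar_ne0 n svar). Qed.
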